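(* Let $\Gamma$ be a splice diagram satisfying the edge determinant and semigroup conditions and let $(F_{v,i})$ be a splice type system for $\Gamma$. For each pair of nodes $u,v$ of $\Gamma$ and each $i\in\{1,\dots,\delta_v-2\}$: if $u=v$ then $\mathrm{in}_{w_u}(F_{v,i})=f_{v,i}$; otherwise $\mathrm{in}_{w_u}(F_{v,i})=f_{v,i}-c_{v,e,i}\,z^{m_{v,e}}$, where $e$ is the unique edge adjacent to $v$ with $e\subseteq[v,u]$.
   Context: A splice diagram is a finite tree $\Gamma$ with at least one vertex of valency $\geq3$ and no vertex of valency $2$; vertices of valency $1$ are leaves, others nodes; $\delta_v$ is the valency of $v$. For each node $v$ and edge $e$ at $v$ a positive integer weight $d_{v,e}$ is given; $d_v=\prod_{e\ni v}d_{v,e}$. For distinct vertices $u,v$, $\ell_{u,v}$ is the product of all $d_{w,e}$ with $w$ a node on the geodesic $[u,v]$ and $e$ an edge at $w$ not in $[u,v]$; $\ell_{v,v}:=d_v$. Edge determinant condition: $d_{u,v}d_{v,u}>\ell_{u,v}$ for each edge $[u,v]$ between two nodes (where $d_{u,v}$ is the weight at $u$ of the edge toward $v$). Semigroup condition: for each node $v$ and edge $e$ at $v$, $d_v\in\sum_{\lambda\in L(v,e)}\mathbb{N}\ell_{v,\lambda}$ with $L(v,e)$ the leaves $\lambda$ with $e\subseteq[v,\lambda]$. With variables $z_\lambda$ and basis vectors $w_\lambda$ of $\mathbb{R}^n$ indexed by the $n$ leaves, $w_u=\sum_\lambda\ell_{u,\lambda}w_\lambda$ for nodes $u$. Fix $\alpha_{v,e,\lambda}\in\mathbb{N}$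 with $d_v=\sum_{\lambda\in L(v,e)}\alpha_{v,e,\lambda}\ell_{v,\lambda}$, $m_{v,e}=\sum\alpha_{v,e,\lambda}w_\lambda$, $z^{m_{v,e}}=\prod z_\lambda^{\alpha_{v,e,\lambda}}$. A splice type system consists of $F_{v,i}=f_{v,i}+g_{v,i}$ ($v$ node, $1\le i\le\delta_v-2$) with $f_{v,i}=\sum_{e\ni v}c_{v,e,i}z^{m_{v,e}}$, all maximal minors of $(c_{v,e,i})_{e,i}$ nonzero, and $g_{v,i}\in\mathbb{C}\{z_\lambda\}$ whose exponents $m$ all satisfy $w_v\cdot m>d_v$ and $w_u\cdot m>\ell_{u,v}$ for nodes $u\neq v$. For $w\in\mathbb{R}_{\ge0}^n$, $\mathrm{in}_w(F)$ is the sum of the terms of $F$ of minimal $w$-weight. *)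

(* Defs.v *)
From HB Require Import structures.
From mathcomp Require Import all_boot all_order all_algebra.
From Stdlib Require Import ClassicalEpsilon.

Set Implicit Arguments.
Unset Strict Implicit.
Unset Printing Implicit Defensive.

Import Order.TTheory GRing.Theory Num.Theory.

Section Tree.
Variables (V : finType) (adj : rel V).

Definition is_tree : Prop :=
  [/\ symmetric adj, irreflexive adj, (forall u v, connect adj u v) &
      (forall u p q, path adj u p -> path adj u q ->
         uniq (u :: p) -> uniq (u :: q) -> last u p = last u q -> p = q)].

Definition valency (v : V) : nat := #|[set x | adj v x]|.
Definition is_leaf (v : V) : bool := valency v == 1%N.
Definition is_node (v : V) : bool := (3 <= valency v)%N.

(* the neighbours of v, i.e. the edges at v (edge [v,x] <-> neighbour x) *)
Definition nbrs (v : V) : seq V := enum [set x | adj v x].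

Definition geod (u v w : V) : Prop :=
  exists p : seq V, [/\ path adj u p, last u p = v, uniq (u :: p) & w \in u :: p].

Definition geodb (u v w : V) : bool :=
  if excluded_middle_informative (geod u v w) then true else false.

Definition is_splice_diagram : Prop :=
  [/\ is_tree, exists v, is_node v & forall v, valency v != 2%N].

(* variables are indexed by the leaves *)
Definition leafT := {l : V | is_leaf l}.
Definition expo := {ffun leafT -> nat}.

Variable d : V -> V -> nat.  (* d v x = d_{v,e} for the edge e = [v,x] *)

Definition dv (v : V) : nat := (\prod_(x | adj v x) d v x)%N.

(* l_{u,v}: product of d_{w,e} over nodes w on [u,v] and edges e = [w,x]
   at w not contained in [u,v] (i.e. x not on [u,v]); l_{v,v} = d_v. *)
Definition ell (u v : V) : nat :=
  if u == v then dv u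
  else (\prod_(w | is_node w && geodb u v w)
          \prod_(x | adj w x && ~~ geodb u v x) d w x)%N.

Definition edge_det_cond : Prop :=
  forall u v, is_node u -> is_node v -> adj u v -> (ell u v < d u v * d v u)%N.

(* L(v,e) for e = [v,x]: leaves l with e contained in [v,l], i.e. x on [v,l] *)
Definition semigroup_cond : Prop :=
  forall v x, is_node v -> adj v x ->
    exists a : V -> nat,
      dv v = (\sum_(l | is_leaf l && geodb v l x) a l * ell v l)%N.

(* the weight vector w_u = sum_l l_{u,l} w_l *)
Definition wvec (u : V) : leafT -> nat := fun l => ell u (val l).

End Tree.
Arguments wvec [V] adj d u _.

Section PSeries.
Variables (I : finType) (C : numClosedFieldType).
Local Open Scope ring_scope.

(* a power series = its coefficient function on exponent vectors *)
Definition pser := {ffun I -> nat} -> C.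

Definition wdot (w : I -> nat) (m : {ffun I -> nat}) : nat :=
  (\sum_i w i * m i)%N.

Definition pmono (m : {ffun I -> nat}) : pser :=
  fun m' => if m' == m then 1 else 0.

(* convergent power series (positive polyradius): Cauchy-type bound *)
Definition convergent (g : pser) : Prop :=
  exists rho M : C, 0 < rho /\
    forall m, `|g m| * rho ^+ (\sum_i m i)%N <= M.

Definition initial (w : I -> nat) (F : pser) : pser :=
  fun m =>
    if excluded_middle_informative
         (F m != 0 /\ forall m', F m' != 0 -> (wdot w m <= wdot w m')%N)
    then F m else 0.

End PSeries.
Arguments pmono {I C} m _.

Section SpliceSystem.
Variables (V : finType) (adj : rel V) (d : V -> V -> nat)
          (C : numClosedFieldType).
Local Open Scope ring_scope.

(* alpha a v x l = alpha_{v,e,l} for e = [v,x];  m_{v,e} = sum alpha w_l *)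
Definition mexp (a : V -> V -> V -> nat) (v x : V) : expo adj :=
  [ffun l : leafT adj => if geodb adj v (val l) x then a v x (val l) else 0%N].

Definition alpha_cond (a : V -> V -> V -> nat) : Prop :=
  forall v x, is_node adj v -> adj v x ->
    dv adj d v = (\sum_(l : leafT adj | geodb adj v (val l) x)
                    a v x (val l) * ell adj d v (val l))%N.

(* c v x i = c_{v,e,i} (e = [v,x], i 0-based: i < delta_v - 2).
   All maximal minors of the delta_v x (delta_v - 2) matrix are nonzero. *)
Definition minors_cond (c : V -> V -> nat -> C) : Prop :=
  forall v, is_node adj v ->
    forall f : 'I_(valency adj v - 2) -> 'I_(valency adj v), injective f ->
      \det (\matrix_(r, s) c v (nth v (nbrs adj v) (f r)) s) != 0.

Definition g_cond (a : V -> V -> V -> nat) (g : V -> nat -> pser (leafT adj) C) : Prop :=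
  forall v i, is_node adj v -> (i < valency adj v - 2)%N ->
    convergent (g v i) /\
    forall m, g v i m != 0 ->
      (dv adj d v < wdot (wvec adj d v) m)%N /\
      forall u, is_node adj u -> u != v -> (ell adj d u v < wdot (wvec adj d u) m)%N.

Definition fpart (c : V -> V -> nat -> C) (a : V -> V -> V -> nat) (v : V) (i : nat)
  : pser (leafT adj) C :=
  fun m => \sum_(x | adj v x) c v x i * pmono (mexp a v x) m.

Definition Fsys (c : V -> V -> nat -> C) (a : V -> V -> V -> nat)
  (g : V -> nat -> pser (leafT adj) C) (v : V) (i : nat) : pser (leafT adj) C :=
  fun m => fpart c a v i m + g v i m.

Definition is_splice_type_system (c : V -> V -> nat -> C) (a : V -> V -> V -> nat)
  (g : V -> nat -> pser (leafT adj) C) : Prop :=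
  [/\ alpha_cond a, minors_cond c & g_cond a g].

End SpliceSystem.
Arguments fpart [V] adj [C] c a v i _.
Arguments Fsys [V] adj [C] c a g v i _.

(* Main.v *)
Require Import Defs.
From HB Require Import structures.
From mathcomp Require Import all_boot all_order all_algebra.
From Stdlib Require Import ClassicalEpsilon FunctionalExtensionality.
From mathcomp Require Import zify.
Import Order.TTheory GRing.Theory Num.Theory.
Set Implicit Arguments.
Unset Strict Implicit.

Lemma sum_lt (I : finType) (P : pred I) (A X Y : I -> nat) :
  (forall i, P i -> Y i < X i) -> 0 < \sum_(i | P i) A i ->
  \sum_(i | P i) A i * Y i < \sum_(i | P i) A i * X i.
Proof.
move=> H Hp; apply: (@leq_trans (\sum_(i | P i) A i * (Y i).+1)).
  rewrite [X in _ < X](eq_bigr (fun i => A i * Y i + A i)); last by move=> i _; rewrite mulnS addnC.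
  by rewrite big_split /= -{1}[\sum_(i | P i) A i * Y i]addn0 ltn_add2l.
by apply: leq_sum => i Pi; rewrite leq_mul2l H ?orbT.
Qed.

Section TreeFacts.
Variables (V : finType) (adj : rel V).
Hypothesis symA : symmetric adj.
Hypothesis irrA : irreflexive adj.
Hypothesis conA : forall u v, connect adj u v.
Hypothesis uniqA : forall u p q, path adj u p -> path adj u q ->
   uniq (u :: p) -> uniq (u :: q) -> last u p = last u q -> p = q.

Definition spb u v (p : seq V) := [&& path adj u p, last u p == v & uniq (u :: p)].

Lemma sp_exists u v : exists p, spb u v p.
Proof.
have /connectP [p Hp Hl] := conA u v.
case: (shortenP Hp) Hl => p' P1 P2 _ Hl.
by exists p'; rewrite /spb P1 P2 -Hl eqxx.
Qed.

Definition sp u v := xchoose (sp_exists u v).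

Lemma sp_spec u v : [/\ path adj u (sp u v), last u (sp u v) = v & uniq (u :: sp u v)].
Proof.
by have /and3P [A /eqP B D] := xchooseP (sp_exists u v).
Qed.

Lemma sp_uniq u v p : path adj u p -> last u p = v -> uniq (u :: p) -> p = sp u v.
Proof.
move=> A B D; have [A' B' D'] := sp_spec u v.
apply: (uniqA A A' D D'); by rewrite B B'.
Qed.

Definition G u v := u :: sp u v.

Lemma geodP u v w : geod adj u v w <-> w \in G u v.
Proof.
split.
  by case=> p [A B D M]; rewrite /G -(sp_uniq A B D).
by move=> M; have [A B D] := sp_spec u v; exists (sp u v).
Qed.

Lemma geodE u v w : geodb adj u v w = (w \in G u v).
Proof.
rewrite /geodb; case: excluded_middle_informative => [/geodP -> //|H].
by apply/esym/negP => /geodP.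
Qed.

Lemma G_l x z : x \in G x z.
Proof. exact: mem_head. Qed.

Lemma G_r x z : z \in G x z.
Proof. by have [_ B _] := sp_spec x z; rewrite /G -{1}B mem_last. Qed.

Lemma sp_split y x z : y \in G x z -> sp x z = sp x y ++ sp y z.
Proof.
rewrite /G => Hy; have [A B D] := sp_spec x z.
move: (sp x z) A B D Hy => p A B D Hy.
case/splitPl: Hy A B D => p1 p2 L A B D.
move: A; rewrite cat_path L => /andP[A1 A2].
move: B; rewrite last_cat L => B.
move: D; rewrite -cat_cons cat_uniq => /and3P[D1 D2 D3].
have Hy : y \notin p2.
  apply/negP => Hy; move/hasP: D2; apply; exists y => //.
  by rewrite -L mem_last.
by rewrite -(sp_uniq A1 L D1) -(sp_uniq A2 B) //= Hy.
Qed.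

Lemma G_cat y x z : y \in G x z -> G x z = G x y ++ sp y z.
Proof. by move=> H; rewrite /G (sp_split H). Qed.

Lemma last_rev_belast (x : V) p : last (last x p) (rev (belast x p)) = x.
Proof.
case: p => //= y p; by rewrite rev_cons last_rcons.
Qed.

Lemma G_sym_mem x z w : (w \in G z x) = (w \in G x z).
Proof.
have [A B D] := sp_spec x z.
rewrite /G; move: (sp x z) A B D => p A B D; subst z.
have E : rev (belast x p) = sp (last x p) x.
  apply: sp_uniq.
  - rewrite rev_path; move: A; apply: sub_path => a b /=; by rewrite symA.
  - by rewrite last_rev_belast.
  - by rewrite -rev_rcons -lastI rev_uniq.
by rewrite -E -rev_rcons -lastI mem_rev.
Qed.

Lemma G_inter x y z w : y \in G x z -> w \in G x y -> w \in G y z -> w = y.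
Proof.
move=> H; have [_ _ D] := sp_spec x z.
move: D; rewrite -/(G x z) (G_cat H) cat_uniq => /and3P[_ D _] Hw.
rewrite inE => /orP[/eqP //|Hw2].
by case/negP: D; apply/hasP; exists w.
Qed.

Lemma G_sub_l x y z w : y \in G x z -> w \in G x y -> w \in G x z.
Proof. by move=> H Hw; rewrite (G_cat H) mem_cat Hw. Qed.

Lemma G_sub_r x y z w : y \in G x z -> w \in G y z -> w \in G x z.
Proof.
move=> H; rewrite inE => /orP[/eqP -> //|Hw].
by rewrite (G_cat H) mem_cat Hw orbT.
Qed.

Lemma G_cover x y z w : y \in G x z -> (w \in G x z) = (w \in G x y) || (w \in G y z).
Proof.
move=> H; apply/idP/orP => [|[]]; last 2 first.
- exact: G_sub_l.
- exact: G_sub_r.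
by rewrite (G_cat H) mem_cat => /orP[->|Hw]; [left|right; rewrite inE Hw orbT].
Qed.

Lemma nbr_fact x y z w x' : y \in G x z -> w \in G x y -> w != y ->
  adj w x' -> x' \in G y z -> x' = y.
Proof.
move=> H Hw Hwy A Hx.
have Hsub : forall t, t \in G x' y -> t \in G y z.
  by move=> t; rewrite G_sym_mem => Ht; apply: (G_sub_l Hx).
have Hnw : w \notin G x' y.
  apply/negP => /Hsub Hw2; by move: Hwy; rewrite (G_inter H Hw Hw2) eqxx.
have [A1 B1 D1] := sp_spec x' y.
have E : x' :: sp x' y = sp w y.
  apply: sp_uniq => //=; first by rewrite A A1.
  by rewrite Hnw.
have Hx2 : x' \in G x y.
  apply: (G_sub_r Hw); by rewrite /G -E inE mem_head orbT.
exact: (G_inter H Hx2 Hx).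
Qed.

Lemma nbr_fact2 x y z w x' : y \in G x z -> w \in G y z -> w != y ->
  adj w x' -> x' \in G x y -> x' = y.
Proof.
move=> H Hw Hwy A Hx.
apply: (nbr_fact (x := z) (z := x) (w := w)) => //; by rewrite G_sym_mem.
Qed.

Lemma sp_adj x y : adj x y -> sp x y = [:: y].
Proof.
move=> A; apply/esym/sp_uniq => //=; first by rewrite A.
by rewrite inE andbT; apply/eqP => E; move: A; rewrite E irrA.
Qed.

Lemma head_adj v x l : adj v x -> x \in G v l -> head v (sp v l) = x.
Proof. by move=> A H; rewrite (sp_split H) sp_adj. Qed.

Lemma sp_nil v l : v != l -> sp v l <> [::].
Proof. by have [_ B _] := sp_spec v l; move=> H E; move: B H; rewrite E /= => ->; rewrite eqxx. Qed.

Lemma head_mem v l : v != l -> head v (sp v l) \in sp v l.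
Proof. by move/sp_nil; case: (sp v l) => //= ? ?; rewrite mem_head. Qed.

Lemma head_adjP v l : v != l -> adj v (head v (sp v l)).
Proof.
move/sp_nil; have [A _ _] := sp_spec v l.
by case: (sp v l) A => //= y p /andP[].
Qed.

Lemma head_split v a b : head v (sp v a) != head v (sp v b) -> v \in G a b.
Proof.
move=> Hh.
have [A1 B1 D1] := sp_spec a v; have [A2 B2 D2] := sp_spec v b.
have E : sp a v ++ sp v b = sp a b.
  apply: sp_uniq.
  - by rewrite cat_path A1 B1 A2.
  - by rewrite last_cat B1.
  rewrite -cat_cons cat_uniq D1 /=; move: D2 => /= /andP[Nv ->]; rewrite andbT.
  apply/hasP => -[t Ht Hta].
  have Htv : t != v by apply/eqP => E; move: Ht; rewrite E (negbTE Nv).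
  move: Hta; rewrite -/(G a v) G_sym_mem => Hta.
  have Hb : t \in G v b by rewrite inE Ht orbT.
  move: Hh; rewrite (sp_split Hta) (sp_split Hb).
  have : v != t by rewrite eq_sym.
  move/sp_nil.
  by case: (sp v t) => //= y p _; rewrite eqxx.
by rewrite /G -E -cat_cons mem_cat -/(G a v) G_r.
Qed.


Lemma sp_self x : sp x x = [::].
Proof. by apply/esym/sp_uniq. Qed.

Lemma interior_val v u : v != u -> head v (sp v u) != u ->
  2 <= valency adj (head v (sp v u)).
Proof.
move=> Hvu; have [A B D] := sp_spec v u; move: (sp v u) A B D => p A B D.
case: p A B D => [|e [|e2 r]] /=.
- by move=> _ E; move: Hvu; rewrite E eqxx.
- by move=> _ -> _; rewrite eqxx.
move=> /and3P[A1 A2 _] _ /andP[D1 _] _.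
have Hv : v != e2 by apply/eqP => E; move: D1; rewrite E !inE eqxx orbT.
have C2 : #|[set v; e2]| = 2 by rewrite cards2 Hv.
rewrite /valency -C2; apply: subset_leq_card.
apply/subsetP => t; rewrite !inE => /orP[/eqP ->|/eqP ->] //.
by rewrite symA.
Qed.

Section Ell.
Variable d : V -> V -> nat.
Hypothesis dpos : forall v x, is_node adj v -> adj v x -> 0 < d v x.

Notation ell := (ell adj d).
Notation dv := (dv adj d).

Lemma ell_prod x z : x != z -> ell x z = \prod_(w : V) \prod_(y : V)
   d w y ^ (is_node adj w && adj w y && (w \in G x z) && (y \notin G x z)).
Proof.
move=> H; rewrite /ell (negbTE H) big_mkcond; apply: eq_bigr => w _.
rewrite geodE; case: (is_node adj w); case: (w \in G x z) => /=.
- rewrite big_mkcond; apply: eq_bigr => y _; rewrite geodE.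
  by case: (adj w y); case: (y \in G x z); rewrite /= ?expn1 ?expn0.
all: by rewrite big1 // => y _; rewrite ?andbF expn0.
Qed.

Lemma dv_prod y : is_node adj y -> dv y = \prod_(w : V) \prod_(t : V)
   d w t ^ (is_node adj w && adj w t && (w == y)).
Proof.
move=> Hy; rewrite (bigD1 y) //= [X in _ = _ * X]big1 ?muln1.
  rewrite /dv big_mkcond; apply: eq_bigr => t _.
  by rewrite Hy eqxx /=; case: (adj y t); rewrite ?expn1 ?expn0.
move=> w Hw; apply: big1 => t _; by rewrite (negbTE Hw) andbF expn0.
Qed.

Lemma prod_single p q : d p q = \prod_(w : V) \prod_(t : V)
   d w t ^ ((w == p) && (t == q)).
Proof.
rewrite (bigD1 p) //= [X in _ = _ * X]big1 ?muln1.
  rewrite (bigD1 q) //= [X in _ = _ * X]big1 ?muln1 ?eqxx ?expn1 //.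
  by move=> t Ht; rewrite (negbTE Ht) expn0.
by move=> w Hw; apply: big1 => t _; rewrite (negbTE Hw) expn0.
Qed.

Lemma dv_pos v : is_node adj v -> 0 < dv v.
Proof. move=> Hv; apply: prodn_cond_gt0 => x; exact: dpos. Qed.

Lemma ell_pos x z : x != z -> 0 < ell x z.
Proof.
move=> H; rewrite /ell (negbTE H).
apply: prodn_cond_gt0 => w /andP[Hw _]; apply: prodn_cond_gt0 => t /andP[Ht _].
exact: dpos.
Qed.

Lemma ell_sym x z : ell x z = ell z x.
Proof.
case: (eqVneq x z) => [->//|H].
have H' : z != x by rewrite eq_sym.
rewrite (ell_prod H) (ell_prod H'); apply: eq_bigr => w _; apply: eq_bigr => t _.
by rewrite !(G_sym_mem x z).
Qed.

Lemma ellA x y z : is_node adj y -> y \in G x z -> ell x z * dv y = ell x y * ell y z.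
Proof.
move=> Hy H.
case: (eqVneq x z) => [E|Hxz].
  move: H; rewrite -E /G sp_self inE => /eqP ->.
  by rewrite /ell eqxx.
case: (eqVneq x y) => [E|Hxy].
  by rewrite -E {2}/ell eqxx mulnC.
case: (eqVneq y z) => [E|Hyz].
  by rewrite -E {3}/ell eqxx.
rewrite (ell_prod Hxz) (ell_prod Hxy) (ell_prod Hyz) (dv_prod Hy) -!big_split.
apply: eq_bigr => w _.
rewrite -!big_split; apply: eq_bigr => t _; rewrite /= -!expnD; congr (_ ^ _).
case Hn: (is_node adj w && adj w t) => //=.
have Hadj : adj w t by case/andP: Hn.
have F1 : (w \in G x y) && (w \in G y z) = (w == y).
  apply/idP/eqP => [/andP[h1 h2]|->]; first exact: G_inter h1 h2.
  by rewrite G_r G_l.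
have F2 : (t \in G x y) && (t \in G y z) = (t == y).
  apply/idP/eqP => [/andP[h1 h2]|->]; first exact: G_inter h1 h2.
  by rewrite G_r G_l.
have F3 : ~~ ((w == y) && (t == y)).
  by apply/negP => /andP[/eqP E1 /eqP E2]; move: Hadj; rewrite E1 E2 irrA.
have F4 : (w \in G x y) && (w != y) && (t \in G y z) ==> (t == y).
  apply/implyP; by case/andP => /andP[h1 h2] h3; apply/eqP; apply: nbr_fact h1 h2 Hadj h3.
have F5 : (w \in G y z) && (w != y) && (t \in G x y) ==> (t == y).
  apply/implyP; by case/andP => /andP[h1 h2] h3; apply/eqP; apply: nbr_fact2 h1 h2 Hadj h3.
rewrite (G_cover w H) (G_cover t H).
move: F1 F2 F3 F4 F5.
case: (w \in G x y); case: (w \in G y z); case: (t \in G x y); case: (t \in G y z);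
  case: (w == y); case: (t == y) => //=.
Qed.


Lemma ell_adj p q : adj p q -> is_node adj p -> is_node adj q ->
  ell p q * (d p q * d q p) = dv p * dv q.
Proof.
move=> A Hp Hq.
have Hpq : p != q by apply/eqP => E; move: A; rewrite E irrA.
have Gpq : G p q = [:: p; q] by rewrite /G sp_adj.
rewrite (ell_prod Hpq) Gpq (prod_single p q) (prod_single q p) (dv_prod Hp) (dv_prod Hq).
rewrite -!big_split; apply: eq_bigr => w _.
rewrite -!big_split; apply: eq_bigr => t _; rewrite /= -!expnD; congr (_ ^ _).
rewrite !inE.
have F1 : (w == p) ==> is_node adj w by apply/implyP => /eqP ->.
have F2 : (w == q) ==> is_node adj w by apply/implyP => /eqP ->.
have F3 : (w == p) && (t == q) ==> adj w t by apply/implyP => /andP[/eqP -> /eqP ->].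
have F4 : (w == q) && (t == p) ==> adj w t.
  by apply/implyP => /andP[/eqP -> /eqP ->]; rewrite symA.
have F5 : ~~ ((w == p) && (w == q)).
  by apply/negP => /andP[/eqP -> /eqP E]; move: Hpq; rewrite E eqxx.
have F6 : ~~ ((t == p) && (t == q)).
  by apply/negP => /andP[/eqP -> /eqP E]; move: Hpq; rewrite E eqxx.
have F7 : (w == p) && (t == p) ==> ~~ adj w t.
  by apply/implyP => /andP[/eqP -> /eqP ->]; rewrite irrA.
have F8 : (w == q) && (t == q) ==> ~~ adj w t.
  by apply/implyP => /andP[/eqP -> /eqP ->]; rewrite irrA.
move: F1 F2 F3 F4 F5 F6 F7 F8.
case: (is_node adj w); case: (adj w t); case: (w == p); case: (w == q);
  case: (t == p); case: (t == q) => //=.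
Qed.

Hypothesis edet : edge_det_cond adj d.

Lemma edge_lt p q : adj p q -> is_node adj p -> is_node adj q ->
  ell p q * ell q p < dv p * dv q.
Proof.
move=> A Hp Hq.
have Hpq : p != q by apply/eqP => E; move: A; rewrite E irrA.
rewrite [ell q p]ell_sym -(ell_adj A Hp Hq) ltn_pmul2l; last exact: ell_pos.
exact: edet.
Qed.


Hypothesis noval2 : forall v, valency adj v != 2.

Lemma weightB u (Hu : is_node adj u) n : forall v, size (sp v u) = n ->
  is_node adj v -> v != u -> forall l, ~~ is_node adj l ->
  head v (sp v u) \in G v l -> ell u v * ell v l < ell u l * dv v.
Proof.
have Hnl : forall x l, is_node adj x -> ~~ is_node adj l -> x != l.
  by move=> x l Hx Hl; apply/eqP => E; move: Hl; rewrite -E Hx.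
elim: n => [|n IH] v Hs Hv Hvu l Hl Hel.
  by have := sp_nil Hvu; move/size0nil: Hs.
have Ave : adj v (head v (sp v u)) := head_adjP Hvu.
have Hmem : head v (sp v u) \in G v u by rewrite inE head_mem ?orbT.
have Hint : head v (sp v u) != u -> is_node adj (head v (sp v u)).
  move=> H; have := interior_val Hvu H; have := noval2 (head v (sp v u)).
  by rewrite /is_node leq_eqVlt eq_sym => /negbTE ->.
move: (head v (sp v u)) Ave Hmem Hel Hint => e Ave Hmem Hel Hint.
have Hve : v != e by apply/eqP => E; move: Ave; rewrite E irrA.
have He : is_node adj e.
  by case: (eqVneq e u) => [->//|/Hint].
have A1 := ellA He Hel.
have Pl := ell_pos (Hnl _ _ He Hl).
have Pe := dv_pos He.
case: (eqVneq e u) => [Heu|Heu].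
  subst e.
  have El := edge_lt (Ave : adj v u) Hv Hu.
  have P1 := ell_pos (Hnl _ _ Hu Hl).
  rewrite -(ltn_pmul2r Pe) -mulnA A1 [ell u v]ell_sym.
  rewrite [ell u v]ell_sym in El; nia.
have Hs' : size (sp e u) = n.
  by move: Hs; rewrite (sp_split Hmem) (sp_adj Ave) /= => -[].
have A2 : ell u v * dv e = ell u e * ell e v.
  by apply: ellA He _; rewrite G_sym_mem.
have H3 : ell u e * ell e l <= ell u l * dv e.
  case: (boolP (head e (sp e u) \in G e l)) => Hh.
    by apply: ltnW; exact: IH e Hs' He Heu l Hl Hh.
  have Hneq : head e (sp e u) != head e (sp e l).
    apply/eqP => E; move: Hh; rewrite E inE head_mem ?orbT //; exact: Hnl.
  by rewrite (ellA He (head_split Hneq)).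
have El := edge_lt (_ : adj e v) He Hv.
have Pue : 0 < ell u e by apply: ell_pos; rewrite eq_sym.
rewrite -(ltn_pmul2r Pe) -(ltn_pmul2r Pe).
have -> : ell u v * ell v l * dv e * dv e = (ell u v * dv e) * (ell v l * dv e) by lia.
rewrite A2 A1.
apply: (@leq_trans ((ell u e * ell e l) * (dv e * dv v))).
  have -> : ell u e * ell e v * (ell v e * ell e l) = (ell u e * ell e l) * (ell e v * ell v e) by lia.
  by rewrite ltn_pmul2l ?muln_gt0 ?Pue ?Pl //; apply: El; rewrite symA.
apply: (@leq_trans ((ell u l * dv e) * (dv e * dv v))); last by apply/eqP; lia.
by rewrite leq_mul.
Qed.


Variable a : V -> V -> V -> nat.
Hypothesis Halpha : alpha_cond adj d a.

Lemma wdotE u v x : wdot (wvec adj d u) (mexp adj a v x) =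
  \sum_(l : leafT adj | geodb adj v (val l) x) ell u (val l) * a v x (val l).
Proof.
rewrite /wdot [in RHS]big_mkcond /=; apply: eq_bigr => l _; rewrite ffunE /wvec.
by case: ifP; rewrite ?muln0.
Qed.

Lemma leaf_not_node (l : leafT adj) : ~~ is_node adj (val l).
Proof. by have := valP l; rewrite /is_leaf /is_node => /eqP ->. Qed.

Lemma sum_pos_a v x : is_node adj v -> adj v x ->
  0 < \sum_(l : leafT adj | geodb adj v (val l) x) a v x (val l).
Proof.
move=> Hv Ax; have := dv_pos Hv; rewrite (Halpha Hv Ax) !lt0n; apply: contra.
rewrite !sum_nat_eq0 => /forall_inP H; apply/forall_inP => l Pl.
by rewrite (eqP (H l Pl)).
Qed.

Lemma wV v x : is_node adj v -> adj v x -> wdot (wvec adj d v) (mexp adj a v x) = dv v.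
Proof.
move=> Hv Ax; rewrite wdotE (Halpha Hv Ax); apply: eq_bigr => l _; exact: mulnC.
Qed.

Lemma wA u v x : is_node adj v -> v != u -> adj v x ->
  x != head v (sp v u) -> wdot (wvec adj d u) (mexp adj a v x) = ell u v.
Proof.
move=> Hv Hvu Ax Hx.
apply/eqP; rewrite -(eqn_pmul2r (dv_pos Hv)); apply/eqP.
rewrite wdotE big_distrl /= [in RHS](Halpha Hv Ax) big_distrr /=.
apply: eq_bigr => l Hl.
have Hxl : x \in G v (val l) by rewrite -geodE.
have Hh : head v (sp v u) != head v (sp v (val l)) by rewrite (head_adj Ax Hxl) eq_sym.
have E := ellA Hv (head_split Hh).
rewrite mulnAC E -mulnA; congr (_ * _); exact: mulnC.
Qed.

Lemma wB u v : is_node adj u -> is_node adj v -> v != u ->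
  ell u v < wdot (wvec adj d u) (mexp adj a v (head v (sp v u))).
Proof.
move=> Hu Hv Hvu.
have Ae := head_adjP Hvu.
rewrite -(ltn_pmul2r (dv_pos Hv)) wdotE big_distrl /= [in X in X < _](Halpha Hv Ae) big_distrr /=.
rewrite (eq_bigr (fun l : leafT adj => a v (head v (sp v u)) (val l) * (ell u v * ell v (val l)))); last first.
  by move=> l _; rewrite mulnCA.
rewrite [X in _ < X](eq_bigr (fun l : leafT adj => a v (head v (sp v u)) (val l) * (ell u (val l) * dv v))); last first.
  by move=> l _; rewrite mulnAC mulnC.
apply: sum_lt; last exact: sum_pos_a.
move=> l Hl; apply: (weightB Hu (erefl _) Hv Hvu (leaf_not_node l)).
by rewrite -geodE.
Qed.


Section Main.
Variables (C : numClosedFieldType) (c : V -> V -> nat -> C)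
  (g : V -> nat -> pser (leafT adj) C).
Hypothesis Hminors : minors_cond adj c.
Hypothesis Hg : g_cond d a g.
Local Open Scope ring_scope.

Lemma minor_ex v i e : is_node adj v -> (i < valency adj v - 2)%N ->
  exists x, [/\ adj v x, x != e & c v x i != 0].
Proof.
move=> Hv Hi.
case: (boolP [exists x, [&& adj v x, x != e & c v x i != 0]]) => [/existsP[x /and3P[h1 h2 h3]]|H].
  by exists x.
exfalso.
pose idx := index e (nbrs adj v).
have Hf : forall r : 'I_(valency adj v - 2),
    ((if (r < idx)%N then (r : nat) else r.+1) < valency adj v)%N.
  by move=> r; have := ltn_ord r; case: (ltnP r idx) => _ h; lia.
pose f r := Ordinal (Hf r).
have finj : injective f.
  move=> r1 r2 /(congr1 val) /=; case: (ltnP r1 idx) => h1; case: (ltnP r2 idx) => h2 E;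
  apply: val_inj => /=; lia.
have := Hminors Hv finj; apply/negP; rewrite negbK.
rewrite (expand_det_col _ (Ordinal Hi)) big1 // => r _.
rewrite mxE /=.
have Hs : (f r < size (nbrs adj v))%N by rewrite /nbrs -cardE ltn_ord.
have Hadj : adj v (nth v (nbrs adj v) (f r)).
  by have := mem_nth v Hs; rewrite /nbrs mem_enum inE.
have Hne : nth v (nbrs adj v) (f r) != e.
  apply/eqP => E; have := index_uniq v Hs (enum_uniq _).
  rewrite -/(nbrs adj v) E -/idx /=; case: (ltnP r idx) => h; lia.
move/existsPn: H => /(_ (nth v (nbrs adj v) (f r))); rewrite Hadj Hne /= negbK.
by move/eqP ->; rewrite mul0r.
Qed.

Lemma initialE (I : finType) (w : I -> nat) (F : pser I C) mu :
  (forall m, F m != 0 -> (mu <= wdot w m)%N) ->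
  (exists m0, F m0 != 0 /\ wdot w m0 = mu) ->
  forall m, initial w F m = if wdot w m == mu then F m else 0.
Proof.
move=> H1 [m0 [Hm0 Hw0]] m; rewrite /initial.
case: excluded_middle_informative => [[Hm Hmin]|Hn].
  have h2 : (wdot w m <= mu)%N by rewrite -Hw0; exact: Hmin.
  have h1 := H1 m Hm.
  by have -> : wdot w m == mu by rewrite eqn_leq h2 h1.
move: Hn; case: (boolP (wdot w m == mu)) => // /eqP Hw Hn.
apply/esym/eqP; apply: contraT => Hm.
exfalso; apply: Hn; split=> // m' Hm'; rewrite Hw; exact: H1.
Qed.

Lemma mexp_neq v x y : is_node adj v -> adj v x -> adj v y -> x != y ->
  mexp adj a v x != mexp adj a v y.
Proof.
move=> Hv Ax Ay Hxy.
have := sum_pos_a Hv Ax; rewrite lt0n sum_nat_eq0 => /forall_inPn[l Hl Hal].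
have Hl2 : geodb adj v (val l) x := Hl.
apply/eqP => E; move/ffunP: E => /(_ l); rewrite /mexp !ffunE Hl2.
case: ifP => Hy.
  move: Hl2 Hy; rewrite !geodE => Hl3 Hy.
  by move: Hxy; rewrite -(head_adj Ax Hl3) -(head_adj Ay Hy) eqxx.
by move=> h; move: Hal; rewrite h.
Qed.

Lemma fpart_at v i x : is_node adj v -> adj v x ->
  fpart adj c a v i (mexp adj a v x) = c v x i.
Proof.
move=> Hv Ax; rewrite /fpart (bigD1 x) //= big1 => [|y /andP[Ay Hyx]].
  by rewrite /pmono eqxx mulr1 addr0.
by rewrite /pmono ifN ?mulr0 // mexp_neq // eq_sym.
Qed.

Lemma fpart_supp v i m : fpart adj c a v i m != 0 ->
  exists2 x, adj v x & m = mexp adj a v x.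
Proof.
move=> H.
case: (boolP [exists x, adj v x && (m == mexp adj a v x)]) => [/existsP[x /andP[Ax /eqP E]]|Hn].
  by exists x.
move: H; rewrite /fpart big1 ?eqxx // => x Ax.
move/existsPn: Hn => /(_ x); rewrite Ax /= => Hm.
by rewrite /pmono (negbTE Hm) mulr0.
Qed.

Lemma main_gen u v i : is_node adj u -> is_node adj v ->
    (i < valency adj v - 2)%N ->
    (u = v -> initial (wvec adj d u) (Fsys adj c a g v i) = fpart adj c a v i) /\
    (u <> v -> exists e : V,
       [/\ adj v e, geod adj v u e,
           (forall e', adj v e' -> geod adj v u e' -> e' = e) &
           initial (wvec adj d u) (Fsys adj c a g v i) =
             (fun m => fpart adj c a v i m - c v e i * pmono (mexp adj a v e) m)]).
Proof.
move=> Hu Hv Hi; split.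
  move=> E; subst u.
  have Hgv : forall m, g v i m != 0 -> (dv v < wdot (wvec adj d v) m)%N.
    by move=> m h; have [_ H] := Hg Hv Hi; have [] := H m h.
  have Hfv : forall m, fpart adj c a v i m != 0 -> wdot (wvec adj d v) m = dv v.
    by move=> m /fpart_supp[x Ax ->]; exact: wV.
  have H1 : forall m, Fsys adj c a g v i m != 0 -> (dv v <= wdot (wvec adj d v) m)%N.
    move=> m; rewrite /Fsys; case: (eqVneq (g v i m) 0) => [->|hg]; rewrite ?addr0 => h.
      by rewrite Hfv.
    by apply: ltnW; exact: Hgv.
  have [x [Ax _ Hc]] := minor_ex v Hv Hi.
  have Hg0 : g v i (mexp adj a v x) = 0.
    by apply/eqP; apply: contraT => /Hgv; rewrite wV // ltnn.
  have H2 : exists m0, Fsys adj c a g v i m0 != 0 /\ wdot (wvec adj d v) m0 = dv v.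
    exists (mexp adj a v x); rewrite /Fsys Hg0 addr0 fpart_at // wV //.
  apply: functional_extensionality => m; rewrite (initialE H1 H2).
  case: eqP => Hw.
    rewrite /Fsys; case: (eqVneq (g v i m) 0) => [->|hg]; first by rewrite addr0.
    by have := Hgv m hg; rewrite Hw ltnn.
  case: (eqVneq (fpart adj c a v i m) 0) => // /Hfv.
  by move/Hw.
move=> Huv; have Hvu : v != u by apply/eqP => E; apply: Huv.
have Hgu : forall m, g v i m != 0 -> (ell u v < wdot (wvec adj d u) m)%N.
  move=> m h; have [_ H] := Hg Hv Hi; have [_ H'] := H m h.
  by apply: H' => //; apply/eqP.
exists (head v (sp v u)); split.
- exact: head_adjP.
- by apply/geodP; rewrite inE head_mem ?orbT.
- by move=> e' Ae' /geodP He'; rewrite (head_adj Ae' He').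
move: (head_adjP Hvu) (wB Hu Hv Hvu) (@wA u v) => Ae HwB HwA.
move: (head v (sp v u)) Ae HwB HwA => e Ae HwB HwA.
have Hfu : forall m, fpart adj c a v i m != 0 -> (ell u v <= wdot (wvec adj d u) m)%N.
  move=> m /fpart_supp[x Ax ->].
  case: (eqVneq x e) => [->|Hxe]; first exact: ltnW.
  by rewrite HwA.
have H1 : forall m, Fsys adj c a g v i m != 0 -> (ell u v <= wdot (wvec adj d u) m)%N.
  move=> m; rewrite /Fsys; case: (eqVneq (g v i m) 0) => [->|hg]; rewrite ?addr0 => h.
    exact: Hfu.
  by apply: ltnW; exact: Hgu.
have [x [Ax Hxe Hc]] := minor_ex e Hv Hi.
have Hg0 : g v i (mexp adj a v x) = 0.
  by apply/eqP; apply: contraT => /Hgu; rewrite HwA // ltnn.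
have H2 : exists m0, Fsys adj c a g v i m0 != 0 /\ wdot (wvec adj d u) m0 = ell u v.
  exists (mexp adj a v x); rewrite /Fsys Hg0 addr0 fpart_at // HwA //.
apply: functional_extensionality => m; rewrite (initialE H1 H2).
case: eqP => Hw.
  have Hme : m != mexp adj a v e.
    by apply/eqP => E; move: HwB; rewrite -E Hw ltnn.
  rewrite /Fsys /pmono (negbTE Hme) mulr0 subr0.
  case: (eqVneq (g v i m) 0) => [->|hg]; first by rewrite addr0.
  by have := Hgu m hg; rewrite Hw ltnn.
case: (eqVneq m (mexp adj a v e)) => [->|Hme].
  by rewrite fpart_at // /pmono eqxx mulr1 subrr.
rewrite /pmono (negbTE Hme) mulr0 subr0.
case: (eqVneq (fpart adj c a v i m) 0) => // /fpart_supp[y Ay Em].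
have Hye : y != e by apply/eqP => E; move: Hme; rewrite Em E eqxx.
by move: Hw; rewrite Em HwA.
Qed.

End Main.
End Ell.
End TreeFacts.

Unset Implicit Arguments.
Local Open Scope ring_scope.

Theorem proposition2p18 (V : finType) (adj : rel V) (d : V -> V -> nat)
  (C : numClosedFieldType) (c : V -> V -> nat -> C) (a : V -> V -> V -> nat)
  (g : V -> nat -> pser (leafT adj) C) :
  is_splice_diagram adj ->
  (forall v x, is_node adj v -> adj v x -> (0 < d v x)%N) ->
  edge_det_cond adj d ->
  semigroup_cond adj d ->
  is_splice_type_system d c a g ->
  forall (u v : V) (i : nat), is_node adj u -> is_node adj v ->
    (i < valency adj v - 2)%N ->
    (u = v -> initial (wvec adj d u) (Fsys adj c a g v i) = fpart adj c a v i) /\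
    (u <> v -> exists e : V,
       [/\ adj v e, geod adj v u e,
           (forall e', adj v e' -> geod adj v u e' -> e' = e) &
           initial (wvec adj d u) (Fsys adj c a g v i) =
             (fun m => fpart adj c a v i m - c v e i * pmono (mexp adj a v e) m)]).
Proof.
move=> [[symA irrA conA uniqA] _ noval2] dpos edet _ [Halpha Hminors Hg] u v i Hu Hv Hi.
exact: (main_gen symA irrA conA uniqA dpos edet noval2 Halpha Hminors Hg Hu Hv Hi).
Qed.
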